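(* Let $\mathcal{A}=(Q,q_0,\Delta,F)$ be a probabilistic automaton and $\mathcal{G}$ a set of limit-words. Then: (i) if $\mathcal{G}$ is consistent with $\mathcal{A}$ and contains a value $1$ witness, then $\mathrm{val}(\mathcal{A})=1$; (ii) if $\mathcal{G}$ is complete for $\mathcal{A}$ and $\mathrm{val}(\mathcal{A})=1$, then $\mathcal{G}$ contains a value $1$ witness. In particular, if $\mathcal{G}$ is both consistent with and complete for $\mathcal{A}$, then $\mathrm{val}(\mathcal{A})=1$ if and only if $\mathcal{G}$ contains a value $1$ witness.
   Context: Fix a finite alphabet $A$. A probabilistic automaton is $\mathcal{A}=(Q,q_0,\Delta,F)$ with $Q$ finite, initial state $q_0$, accepting states $F\subseteq Q$, and $\Delta: Q\times A\to\mathcal{D}(Q)$. For $a\in A$ let $M_a(s,t)=\Delta(s,a)(t)$, for $u=a_0\cdots a_{n-1}$ let $M_u=M_{a_0}\cdots M_{a_{n-1}}$ (identity for the empty word), and $\mathbb{P}_{\mathcal{A}}(s\xrightarrow{u}t)=M_u(s,t)$. $\mathbb{P}_{\mathcal{A}}(u)=\sum_{t\in F}\mathbb{P}_{\mathcal{A}}(q_0\xrightarrow{u}t)$ and $\mathrm{val}(\mathcal{A})=\sup_{u\in A^*}\mathbb{P}_{\mathcal{A}}(u)$. A limit-word is a map $\mathbf{u}:Q\times Q\to\{0,1\}$ such that every $s$ has some $t$ with $\mathbf{u}(s,t)=1$. A sequence of words $(u_n)$ reifies $\mathbf{u}$ if for all $s,t$, $\mathbb{P}_{\mathcal{A}}(s\xrightarrow{u_n}t)$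 converges and $\mathbf{u}(s,t)=1\iff\lim_n\mathbb{P}_{\mathcal{A}}(s\xrightarrow{u_n}t)>0$. A set $\mathcal{G}$ of limit-words is consistent with $\mathcal{A}$ if every $\mathbf{u}\in\mathcal{G}$ is reified by some sequence of words. $\mathcal{G}$ is complete for $\mathcal{A}$ if for every sequence of words $(u_n)_{n\in\mathbb{N}}$ there exists $\mathbf{u}\in\mathcal{G}$ such that for all $s,t$: $\limsup_n\mathbb{P}_{\mathcal{A}}(s\xrightarrow{u_n}t)=0\Rightarrow\mathbf{u}(s,t)=0$. A value $1$ witness is a limit-word $\mathbf{u}$ such that for all states $t$, $\mathbf{u}(q_0,t)=1$ implies $t\in F$. *)

(* Defs.v *)
From mathcomp Require Import all_boot all_order all_algebra.
From mathcomp Require Import all_classical all_reals all_analysis.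
Set Implicit Arguments. Unset Strict Implicit. Unset Printing Implicit Defensive.
Import Order.TTheory GRing.Theory Num.Theory.
Import numFieldNormedType.Exports.
Local Open Scope classical_set_scope.
Local Open Scope ring_scope.

Record PA (R : realType) (A Q : finType) := {
  pa_init : Q;
  pa_delta : Q -> A -> Q -> R;
  pa_final : {set Q};
  pa_delta_ge0 : forall s a t, 0 <= pa_delta s a t;
  pa_delta_sum1 : forall s a, \sum_(t : Q) pa_delta s a t = 1
}.

Section Defs.
Variables (R : realType) (A Q : finType) (aut : PA R A Q).

(* P(s --u--> t) = M_u(s,t), with M_{a u} = M_a M_u and M_[::] = identity *)
Fixpoint pa_path (s : Q) (u : seq A) (t : Q) : R :=
  match u with
  | [::] => if s == t then 1 else 0
  | a :: u' => \sum_(r : Q) pa_delta aut s a r * pa_path r u' t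
  end.

Definition pa_accept (u : seq A) : R :=
  \sum_(t in pa_final aut) pa_path (pa_init aut) u t.

Definition pa_val : R := sup (range pa_accept).

Definition limit_word (w : Q -> Q -> bool) : Prop :=
  forall s, exists t, w s t.

Definition reifies (un : nat -> seq A) (w : Q -> Q -> bool) : Prop :=
  forall s t,
    cvgn (fun n => pa_path s (un n) t) /\
    (w s t <-> 0 < limn (fun n => pa_path s (un n) t)).

Definition consistent (G : set (Q -> Q -> bool)) : Prop :=
  forall w, G w -> exists un : nat -> seq A, reifies un w.

Definition complete (G : set (Q -> Q -> bool)) : Prop :=
  forall un : nat -> seq A, exists w, G w /\
    forall s t, limn_sup (fun n => pa_path s (un n) t) = 0 -> w s t = false.

Definition value1_witness (w : Q -> Q -> bool) : Prop :=
  limit_word w /\ forall t, w (pa_init aut) t -> t \in pa_final aut.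

End Defs.

(* Main.v *)
Require Import Defs.
From mathcomp Require Import all_boot all_order all_algebra.
From mathcomp Require Import all_classical all_reals all_analysis.
From mathcomp Require Import lra.
Import Order.TTheory GRing.Theory Num.Theory.
Import numFieldNormedType.Exports.
Local Open Scope classical_set_scope.
Local Open Scope ring_scope.

Section Aux.
Variables (R : realType) (A Q : finType) (aut : PA R A Q).

Lemma path_ge0 u s t : 0 <= pa_path aut s u t.
Proof.
elim: u s => [|a u IH] s /=; first by case: eqP.
by apply: sumr_ge0 => r _; apply: mulr_ge0; [exact: pa_delta_ge0|exact: IH].
Qed.

Lemma path_sum1 u s : \sum_t pa_path aut s u t = 1.
Proof.
elim: u s => [|a u IH] s /=.
  by rewrite (bigD1 s) //= eqxx big1 ?addr0 // => t /negPf; rewrite eq_sym => ->.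
rewrite exchange_big /= -(pa_delta_sum1 aut s a); apply: eq_bigr => r _.
by rewrite -mulr_sumr IH mulr1.
Qed.

Lemma accept_compl u :
  pa_accept aut u = 1 - \sum_(t | t \notin pa_final aut) pa_path aut (pa_init aut) u t.
Proof.
by rewrite -(path_sum1 u (pa_init aut)) (bigID (fun t => t \in pa_final aut)) /= addrK.
Qed.

Lemma accept_le1 u : pa_accept aut u <= 1.
Proof.
rewrite accept_compl lerBlDr lerDl; apply: sumr_ge0 => t _; exact: path_ge0.
Qed.

Lemma has_sup_acc : has_sup (range (pa_accept aut)).
Proof.
split; first by exists (pa_accept aut [::]); exists [::].
by exists 1 => _ [u _ <-]; exact: accept_le1.
Qed.

Lemma cvg_sum0s (I : Type) (r : seq I) (P : pred I) (f : I -> nat -> R) :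
  (forall i, P i -> f i n @[n --> \oo] --> 0) ->
  \sum_(i <- r | P i) f i n @[n --> \oo] --> (0 : R).
Proof.
move=> H; elim: r => [|i r IH].
  under eq_fun do rewrite big_nil.
  exact: cvg_cst.
under eq_fun do rewrite big_cons.
case: (boolP (P i)) => Pi.
  have := cvgD (H i Pi) IH; rewrite addr0 => HH; exact: HH.
exact: IH.
Qed.

Lemma cvg_sum0 (I : finType) (P : pred I) (f : I -> nat -> R) :
  (forall i, P i -> f i n @[n --> \oo] --> 0) ->
  \sum_(i | P i) f i n @[n --> \oo] --> (0 : R).
Proof. exact: cvg_sum0s. Qed.

End Aux.

Theorem lemma2p9 (R : realType) (A Q : finType) (aut : PA R A Q)
    (G : set (Q -> Q -> bool)) (HG : forall w, G w -> limit_word w) :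
  (consistent aut G -> (exists w, G w /\ value1_witness aut w) -> pa_val aut = 1) /\
  (complete aut G -> pa_val aut = 1 -> exists w, G w /\ value1_witness aut w) /\
  (consistent aut G -> complete aut G ->
     (pa_val aut = 1 <-> exists w, G w /\ value1_witness aut w)).
Proof.
have P1 : consistent aut G -> (exists w, G w /\ value1_witness aut w) -> pa_val aut = 1.
  move=> Hc [w [Gw [_ Hw]]]; have [un Hun] := Hc w Gw.
  have H0 : forall t, t \notin pa_final aut ->
      pa_path aut (pa_init aut) (un n) t @[n --> \oo] --> (0 : R).
    move=> t tF; have [cv Hiff] := Hun (pa_init aut) t.
    have wf : w (pa_init aut) t = false.
      by apply/negP => /Hw; rewrite (negPf tF).
    have ge0 : 0 <= limn (fun n => pa_path aut (pa_init aut) (un n) t).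
      by apply: limr_ge => //; apply: nearW => n; exact: path_ge0.
    have : limn (fun n => pa_path aut (pa_init aut) (un n) t) = 0.
      apply/eqP; rewrite eq_le ge0 andbT leNgt; apply/negP => /Hiff.
      by rewrite wf.
    by move=> <-; exact: cv.
  have Hs := @cvg_sum0 R Q _ _ H0.
  have Hacc : pa_accept aut (un n) @[n --> \oo] --> (1 : R).
    rewrite -[1 : R]subr0.
    under eq_fun do rewrite accept_compl.
    exact: cvgB (cvg_cst _) Hs.
  apply/eqP; rewrite eq_le; apply/andP; split.
    apply: ge_sup; first by exists (pa_accept aut [::]); exists [::].
    by move=> _ [u _ <-]; exact: accept_le1.
  apply: (cvgr_to_le Hacc); apply: nearW => n.
  by apply: sup_upper_bound; [exact: has_sup_acc| exists (un n)].
have P2 : complete aut G -> pa_val aut = 1 -> exists w, G w /\ value1_witness aut w.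
  move=> Hc Hv.
  have : forall n : nat, exists u, 1 - n.+1%:R^-1 < pa_accept aut u.
    move=> n; have [_ [u _ <-] Hu] := sup_adherent (harmonic_gt0 n) (@has_sup_acc R A Q aut).
    by exists u; move: Hu; rewrite /pa_val in Hv; rewrite Hv.
  move=> /choice [un Hun].
  have [w [Gw Hw]] := Hc un.
  exists w; split => //; split; first exact: HG.
  move=> t wt; apply/negP => tF; move: wt; rewrite Hw //.
  have Hsq : pa_path aut (pa_init aut) (un n) t @[n --> \oo] --> (0 : R).
    apply: (@squeeze_cvgr _ _ _ _ (fun=> 0) (@harmonic R)); last exact: cvg_harmonic.
    + apply: nearW => n; rewrite path_ge0 /=.
      have H : \sum_(t0 | t0 \notin pa_final aut) pa_path aut (pa_init aut) (un n) t0 < n.+1%:R^-1.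
        by move: (Hun n); rewrite accept_compl ltrD2l ltrN2.
      apply/ltW/(le_lt_trans _ H).
      have tF' : t \notin pa_final aut by apply/negP.
      rewrite (bigD1 t tF') /= lerDl; apply: sumr_ge0 => *; exact: path_ge0.
    + exact: cvg_cst.
  rewrite cvg_limn_supE; last by apply/cvg_ex; exists 0.
  exact: cvg_lim Hsq.
split => //; split => // Hc Hc'; split; [exact: P2|exact: P1].
Qed.
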